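(* Let $\mathcal{X},\mathcal{Y}$ be finite sets, $p(X,Y)$ a fully supported probability distribution on $\mathcal{X}\times\mathcal{Y}$, and $0\le\lambda\le I(X;Y)$. For $\kappa_{\mathcal{X}}\in C(\mathcal{X},\mathbb{N})$ let $\kappa=\kappa_{\mathcal{X}}\otimes e_{\mathcal{Y}}\in C(\mathcal{X}\times\mathcal{Y},\mathbb{N}\times\mathcal{Y})$ be the channel $\kappa(t,y'|x,y)=\kappa_{\mathcal{X}}(t|x)\,\delta_{y'=y}$, and let $C_{\mathrm{IB}(X,Y)}$ be the set of all such channels. Consider: (A) the problem of minimising $I_\kappa(X,Y;T)$ over $\kappa\in C_{\mathrm{IB}(X,Y)}$ subject to $D(\kappa(p(X,Y))\|\kappa(p(X)p(Y)))=\lambda$, where $T$ is the output of $\kappa$ (with values in $\mathbb{N}\times\mathcal{Y}$) and the mutual information is computed from $p(x,y)\kappa(t|x,y)$; (B) the Information Bottleneck problem of minimising $I_q(X;T_{\mathrm{IB}})$ over $q(T_{\mathrm{IB}}|X)\in C(\mathcal{X},\mathbb{N})$ subject to $I_q(Y;T_{\mathrm{IB}})\ge\lambda$, where the information quantities are computed from $q(x,y,t)=p(x,y)q(t|x)$. Then $\kappa_{\mathcal{X}}\otimes e_{\mathcal{Y}}$ is a solution (minimiser) of (A) if and only if $\kappa_{\mathcal{X}}$ is a solution of (B).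
   Context: For sets $\mathcal{A},\mathcal{B}$, $C(\mathcal{A},\mathcal{B})$ denotes the set of channels (conditional probabilities) from $\mathcal{A}$ to $\mathcal{B}$. For a channel $\kappa$ and a distribution $r$ on its input space, $\kappa(r)$ denotes the output distribution $\sum_{a}\kappa(\cdot|a)r(a)$. $D$ is the Kullback–Leibler divergence and $p(X),p(Y)$ are the marginals of $p(X,Y)$. *)

(* Defs.v *)
From HB Require Import structures.
From mathcomp Require Import all_boot all_order all_algebra.
From mathcomp Require Import all_classical all_reals all_analysis.
Set Implicit Arguments. Unset Strict Implicit. Unset Printing Implicit Defensive.
Import Order.TTheory GRing.Theory Num.Theory.
Local Open Scope ring_scope.

Definition xlogy {R : realType} (a b : R) : R :=
  if a == 0 then 0 else a * ln (a / b).

Definition full_support_dist {R : realType} {X Y : finType} (p : X -> Y -> R) :=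
  (forall x y, 0 < p x y) /\ \sum_(x : X) \sum_(y : Y) p x y = 1.

Definition margX {R : realType} {X Y : finType} (p : X -> Y -> R) (x : X) : R :=
  \sum_(y : Y) p x y.
Definition margY {R : realType} {X Y : finType} (p : X -> Y -> R) (y : Y) : R :=
  \sum_(x : X) p x y.

Definition MI_XY {R : realType} {X Y : finType} (p : X -> Y -> R) : R :=
  \sum_(x : X) \sum_(y : Y) xlogy (p x y) (margX p x * margY p y).

Definition is_channel_XN {R : realType} {X : finType} (k : X -> nat -> R) :=
  (forall x t, 0 <= k x t) /\
  (forall x, (\sum_(0 <= t <oo) (k x t)%:E)%E = 1%E).

Definition is_channel_XY_NY {R : realType} {X Y : finType}
    (k : X * Y -> nat * Y -> R) :=
  (forall a b, 0 <= k a b) /\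
  (forall a, (\sum_(0 <= t <oo) (\sum_(y : Y) k a (t, y))%:E)%E = 1%E).

Definition tensor_eY {R : realType} {X Y : finType} (kX : X -> nat -> R)
    : X * Y -> nat * Y -> R :=
  fun a b => kX a.1 b.1 * (b.2 == a.2)%:R.

Definition C_IB {R : realType} {X Y : finType} (k : X * Y -> nat * Y -> R) :=
  exists kX : X -> nat -> R, is_channel_XN kX /\ k = tensor_eY kX.

Definition push {R : realType} {X Y : finType} (r : X -> Y -> R)
    (k : X * Y -> nat * Y -> R) (b : nat * Y) : R :=
  \sum_(a : X * Y) k a b * r a.1 a.2.

Definition prod_marg {R : realType} {X Y : finType} (p : X -> Y -> R) : X -> Y -> R :=
  fun x y => margX p x * margY p y.

Definition KL_NY {R : realType} {Y : finType} (P Q : nat * Y -> R) : \bar R :=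
  (\sum_(0 <= t <oo) (\sum_(y : Y) xlogy (P (t, y)) (Q (t, y)))%:E)%E.

Definition MI_XY_T {R : realType} {X Y : finType} (p : X -> Y -> R)
    (k : X * Y -> nat * Y -> R) : \bar R :=
  (\sum_(0 <= t <oo)
     (\sum_(y' : Y) \sum_(a : X * Y)
        xlogy (p a.1 a.2 * k a (t, y')) (p a.1 a.2 * push p k (t, y')))%:E)%E.

Definition qT {R : realType} {X Y : finType} (p : X -> Y -> R)
    (q : X -> nat -> R) (t : nat) : R :=
  \sum_(x : X) margX p x * q x t.

Definition MI_X_TIB {R : realType} {X Y : finType} (p : X -> Y -> R)
    (q : X -> nat -> R) : \bar R :=
  (\sum_(0 <= t <oo)
     (\sum_(x : X) xlogy (margX p x * q x t) (margX p x * qT p q t))%:E)%E.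

Definition MI_Y_TIB {R : realType} {X Y : finType} (p : X -> Y -> R)
    (q : X -> nat -> R) : \bar R :=
  (\sum_(0 <= t <oo)
     (\sum_(y : Y) xlogy (\sum_(x : X) p x y * q x t) (margY p y * qT p q t))%:E)%E.

Definition solves_A {R : realType} {X Y : finType} (p : X -> Y -> R) (lam : R)
    (k : X * Y -> nat * Y -> R) :=
  [/\ C_IB k,
      KL_NY (push p k) (push (prod_marg p) k) = lam%:E &
      forall k' : X * Y -> nat * Y -> R, C_IB k' ->
        KL_NY (push p k') (push (prod_marg p) k') = lam%:E ->
        (MI_XY_T p k <= MI_XY_T p k')%E].

Definition solves_B {R : realType} {X Y : finType} (p : X -> Y -> R) (lam : R)
    (q : X -> nat -> R) :=
  [/\ is_channel_XN q,
      (lam%:E <= MI_Y_TIB p q)%E &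
      forall q' : X -> nat -> R, is_channel_XN q' ->
        (lam%:E <= MI_Y_TIB p q')%E ->
        (MI_X_TIB p q <= MI_X_TIB p q')%E].

(* Main.v *)
Require Import Defs.
From HB Require Import structures.
From mathcomp Require Import all_boot all_order all_algebra.
From mathcomp Require Import all_classical all_reals all_analysis.
From mathcomp Require Import ring lra.
Import Order.TTheory GRing.Theory Num.Theory.
Local Open Scope ring_scope.

Section Reals.
Variable R : realType.
Implicit Types a b c : R.

Lemma xlogy0 b : xlogy 0 b = 0 :> R.
Proof. by rewrite /xlogy eqxx. Qed.

Lemma xlogyE a b : 0 < a -> 0 < b -> xlogy a b = a * (ln a - ln b).
Proof. by move=> a0 b0; rewrite /xlogy gt_eqF // ln_div // posrE. Qed.

Lemma ln_ge_sub a : 0 < a -> ln a <= a - 1.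
Proof.
move=> a0; have := @le_ln1Dx R (a - 1); rewrite addrCA subrr addr0; apply.
by rewrite ltrBrDl subrr.
Qed.

Lemma xlogy_ge a b c : 0 <= a -> 0 <= b -> (b = 0 -> a = 0) -> 0 < c ->
  a * ln c + a - b * c <= xlogy a b.
Proof.
move=> a0 b0 ba c0; have [->|an0] := eqVneq a 0.
  by rewrite xlogy0 mul0r add0r sub0r oppr_le0 mulr_ge0 // ltW.
have ap : 0 < a by rewrite lt_def an0.
have bp : 0 < b by rewrite lt_def b0 andbT; apply/eqP => /ba /eqP; rewrite (negPf an0).
rewrite xlogyE //.
have z0 : 0 < b * c / a by rewrite divr_gt0 // mulr_gt0.
have := @ln_ge_sub _ z0; rewrite ln_div ?posrE ?mulr_gt0 // lnM ?posrE //.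
move=> H; have := ler_wpM2l (ltW ap) H.
have -> : a * (b * c / a - 1) = b * c - a by rewrite mulrBr mulr1 mulrCA divff ?mulr1 // gt_eqF.
move=> H2; rewrite -subr_ge0; rewrite -subr_ge0 in H2.
by apply: le_trans H2 _; rewrite le_eqVlt; apply/orP; left; apply/eqP; ring.
Qed.

Lemma logsum (I : finType) (a b : I -> R) :
  (forall i, 0 <= a i) -> (forall i, 0 <= b i) -> (forall i, b i = 0 -> a i = 0) ->
  xlogy (\sum_i a i) (\sum_i b i) <= \sum_i xlogy (a i) (b i).
Proof.
move=> a0 b0 ba.
have [A0|An0] := eqVneq (\sum_i a i) 0.
  rewrite A0 xlogy0; move/eqP: A0; rewrite psumr_eq0 // => /allP Ha.
  rewrite big1 // => i _; have /eqP -> := Ha i (mem_index_enum i); exact: xlogy0.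
have Ap : 0 < \sum_i a i by rewrite lt_def An0 sumr_ge0.
have Bp : 0 < \sum_i b i.
  rewrite lt_def sumr_ge0 // andbT; apply/negP => /eqP B0.
  move/eqP: B0; rewrite psumr_eq0 // => /allP Hb.
  move/eqP: An0; apply; apply: big1 => i _; apply: ba; apply/eqP; exact: Hb.
set A := \sum_i a i; set B := \sum_i b i.
have cp : 0 < A / B by rewrite divr_gt0.
have H : \sum_i (a i * ln (A / B) + a i - b i * (A / B)) <= \sum_i xlogy (a i) (b i).
  by apply: ler_sum => i _; apply: xlogy_ge => //; apply: ba.
apply: le_trans H.
rewrite !sumrB -!mulr_suml -/A -/B xlogyE //.
rewrite ln_div ?posrE // le_eqVlt; apply/orP; left; apply/eqP.
rewrite big_split /= -mulr_suml -/A mulrCA divff ?mulr1 ?gt_eqF //; ring.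
Qed.


Lemma xlogy_scale c k q : 0 < c -> 0 <= k -> (0 < k -> 0 < q) ->
  xlogy (c * k) (c * q) = c * k * (ln k - ln q).
Proof.
move=> c0 k0 kq; have [->|kn0] := eqVneq k 0.
  by rewrite !mulr0 xlogy0 mul0r.
have kp : 0 < k by rewrite lt_def kn0 k0.
rewrite xlogyE ?mulr_gt0 ?kq // !lnM ?posrE ?kq //; congr (_ * _); ring.
Qed.

Lemma xlogy_id a : 0 <= a -> xlogy a a = 0.
Proof.
move=> a0; have [->|an0] := eqVneq a 0; first exact: xlogy0.
by rewrite /xlogy (negPf an0) divff // ln1 mulr0.
Qed.

Lemma xlogyZ c a b : 0 <= c -> xlogy (c * a) (c * b) = c * xlogy a b.
Proof.
move=> c0; have [->|cn0] := eqVneq c 0; first by rewrite !mul0r xlogy0.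
rewrite /xlogy mulf_eq0 (negPf cn0) /=; case: ifP => _; first by rewrite mulr0.
rewrite invfM mulrACA divff // mul1r mulrA //.
Qed.

End Reals.


Definition aT {R : realType} {X Y : finType} (p : X -> Y -> R) (k : X -> nat -> R) t :=
  \sum_x xlogy (margX p x * k x t) (margX p x * qT p k t).
Definition bT {R : realType} {X Y : finType} (p : X -> Y -> R) (k : X -> nat -> R) t :=
  \sum_y xlogy (\sum_x p x y * k x t) (margY p y * qT p k t).
Definition cT {R : realType} {X Y : finType} (p : X -> Y -> R) (k : X -> nat -> R) t :=
  \sum_y (\sum_x p x y * k x t) * - ln (margY p y).
Definition AT {R : realType} {X Y : finType} (p : X -> Y -> R) (kk : X * Y -> nat * Y -> R) t :=
  \sum_(y' : Y) \sum_(a : X * Y)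
        xlogy (p a.1 a.2 * kk a (t, y')) (p a.1 a.2 * push p kk (t, y')).

Lemma sum_pair {R : realType} {X Y : finType} (F : X * Y -> R) :
  \sum_(a : X * Y) F a = \sum_x \sum_y F (x, y).
Proof. by rewrite (pair_big xpredT xpredT (fun x y => F (x, y))) /=; apply: eq_bigr => -[]. Qed.

Lemma sum_delta {R : realType} {Y : finType} (G : Y -> R) y :
  \sum_y' (y == y')%:R * G y' = G y.
Proof.
rewrite (bigD1 y) //= eqxx mul1r big1 ?addr0 // => y' ny.
by rewrite eq_sym (negPf ny) mul0r.
Qed.

Section PerT.
Variables (R : realType) (X Y : finType) (p : X -> Y -> R).
Hypothesis p0 : forall x y, 0 < p x y.
Hypothesis p1 : \sum_x \sum_y p x y = 1.

Lemma Y_inhab : exists y : Y, True.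
Proof.
case: (pickP (@predT Y)) => [y _|H]; first by exists y.
move: p1; rewrite big1 => [|x _]; last by rewrite big_pred0.
by move/eqP; rewrite eq_sym oner_eq0.
Qed.

Lemma X_inhab : exists x : X, True.
Proof.
case: (pickP (@predT X)) => [x _|H]; first by exists x.
by move: p1; rewrite big_pred0 // => /eqP; rewrite eq_sym oner_eq0.
Qed.

Lemma margX_gt0 x : 0 < margX p x.
Proof.
have [y _] := Y_inhab; rewrite /margX (bigD1 y) //=.
by rewrite ltr_pwDl // sumr_ge0 // => i _; apply: ltW.
Qed.

Lemma margY_gt0 y : 0 < margY p y.
Proof.
have [x _] := X_inhab; rewrite /margY (bigD1 x) //=.
by rewrite ltr_pwDl // sumr_ge0 // => i _; apply: ltW.
Qed.

Lemma sum_margX : \sum_x margX p x = 1.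
Proof. exact: p1. Qed.

Lemma sum_margY : \sum_y margY p y = 1.
Proof. by rewrite /margY exchange_big. Qed.

Lemma margX_le1 x : margX p x <= 1.
Proof.
rewrite -sum_margX (bigD1 x) //= lerDl sumr_ge0 // => i _; exact: ltW (margX_gt0 i).
Qed.

Lemma margY_le1 y : margY p y <= 1.
Proof.
rewrite -sum_margY (bigD1 y) //= lerDl sumr_ge0 // => i _; exact: ltW (margY_gt0 i).
Qed.

Variable k : X -> nat -> R.
Hypothesis k0 : forall x t, 0 <= k x t.

Lemma push_tensor (r : X -> Y -> R) t y :
  push r (tensor_eY k) (t, y) = \sum_x k x t * r x y.
Proof.
rewrite /push sum_pair; apply: eq_bigr => x _ /=.
rewrite -(sum_delta (fun y' => k x t * r x y') y); apply: eq_bigr => y' _.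
by rewrite /tensor_eY /=; ring.
Qed.

Lemma qT_ge x t : margX p x * k x t <= qT p k t.
Proof.
rewrite /qT (bigD1 x) //= lerDl sumr_ge0 // => i _.
by rewrite mulr_ge0 // ltW // margX_gt0.
Qed.

Lemma qT_ge0 t : 0 <= qT p k t.
Proof. by rewrite /qT sumr_ge0 // => x _; rewrite mulr_ge0 // ltW // margX_gt0. Qed.

Lemma sumJ t : \sum_y (\sum_x p x y * k x t) = qT p k t.
Proof.
rewrite exchange_big /qT; apply: eq_bigr => x _; by rewrite /margX mulr_suml.
Qed.

Lemma J_ge0 t y : 0 <= \sum_x p x y * k x t.
Proof. by rewrite sumr_ge0 // => x _; rewrite mulr_ge0 // ltW. Qed.

Lemma J_le t y : \sum_x p x y * k x t <= qT p k t.
Proof.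
rewrite -sumJ (bigD1 y) //= lerDl sumr_ge0 // => i _; exact: J_ge0.
Qed.

Lemma J_ge t x y : p x y * k x t <= \sum_x p x y * k x t.
Proof.
rewrite (bigD1 x) //= lerDl sumr_ge0 // => i _; by rewrite mulr_ge0 // ltW.
Qed.

Lemma k_pos_qT x t : 0 < k x t -> 0 < qT p k t.
Proof. by move=> kp; apply: lt_le_trans (qT_ge x t); rewrite mulr_gt0 // margX_gt0. Qed.

Lemma aT_E t : aT p k t = \sum_x \sum_y p x y * k x t * (ln (k x t) - ln (qT p k t)).
Proof.
apply: eq_bigr => x _; rewrite xlogy_scale ?margX_gt0 //; last exact: k_pos_qT.
by rewrite /margX !mulr_suml.
Qed.

Lemma bT_E t : bT p k t =
  \sum_y \sum_x p x y * k x t * (ln (\sum_x p x y * k x t) - ln (margY p y) - ln (qT p k t)).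
Proof.
apply: eq_bigr => y _; rewrite -mulr_suml.
have [J0|Jn0] := eqVneq (\sum_x p x y * k x t) 0; first by rewrite J0 xlogy0 mul0r.
have Jp : 0 < \sum_x p x y * k x t by rewrite lt_def Jn0 J_ge0.
have qp : 0 < qT p k t by apply: lt_le_trans (J_le t y).
rewrite xlogyE ?mulr_gt0 ?margY_gt0 // lnM ?posrE ?margY_gt0 //; ring.
Qed.

Lemma AT_E t : AT p (tensor_eY k) t =
  \sum_y \sum_x p x y * k x t * (ln (k x t) - ln (\sum_x p x y * k x t)).
Proof.
apply: eq_bigr => y' _; rewrite sum_pair; apply: eq_bigr => x _ /=.
rewrite (bigD1 y') //= big1 ?addr0 => [|y ny]; last first.
  by rewrite /tensor_eY /= eq_sym (negPf ny) !mulr0 xlogy0.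
rewrite /tensor_eY /= eqxx mulr1 push_tensor.
have -> : \sum_x0 k x0 t * p x0 y' = \sum_x0 p x0 y' * k x0 t by apply: eq_bigr => ? _; rewrite mulrC.
rewrite xlogy_scale //; move=> kp; apply: lt_le_trans (J_ge t x y'); exact: mulr_gt0.
Qed.

Lemma cT_E t : cT p k t = \sum_y \sum_x p x y * k x t * - ln (margY p y).
Proof. by apply: eq_bigr => y _; rewrite mulr_suml. Qed.

Lemma ID_t t : AT p (tensor_eY k) t + bT p k t = aT p k t + cT p k t.
Proof.
rewrite AT_E bT_E aT_E cT_E [in X in _ = X + _]exchange_big /= -!big_split /=.
apply: eq_bigr => y _; rewrite -!big_split /=; apply: eq_bigr => x _; ring.
Qed.

Lemma bT_ge0 t : 0 <= bT p k t.
Proof.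
have := @logsum R Y (fun y => \sum_x p x y * k x t) (fun y => margY p y * qT p k t).
rewrite sumJ -mulr_suml sum_margY mul1r xlogy_id; last first.
  exact: qT_ge0.
apply.
- by move=> y; exact: J_ge0.
- by move=> y; rewrite mulr_ge0 ?qT_ge0 // ltW // margY_gt0.
- move=> y /eqP; rewrite mulf_eq0 gt_eqF ?margY_gt0 //= => /eqP q0.
  by apply/le_anti; rewrite J_ge0 andbT; have := J_le t y; rewrite q0.
Qed.

Lemma bT_le_aT t : bT p k t <= aT p k t.
Proof.
rewrite aT_E exchange_big /=; apply: ler_sum => y _.
have -> : \sum_x p x y * k x t * (ln (k x t) - ln (qT p k t)) =
          \sum_x xlogy (p x y * k x t) (p x y * qT p k t).
  apply: eq_bigr => x _; rewrite xlogy_scale //; exact: k_pos_qT.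
have -> : margY p y * qT p k t = \sum_x p x y * qT p k t by rewrite /margY mulr_suml.
apply: logsum.
- by move=> x; rewrite mulr_ge0 // ltW.
- by move=> x; rewrite mulr_ge0 ?qT_ge0 // ltW.
- move=> x /eqP; rewrite mulf_eq0 gt_eqF //= => /eqP q0.
  have : margX p x * k x t <= 0 by rewrite -q0 qT_ge.
  rewrite pmulr_rle0 ?margX_gt0 // => kle; by rewrite (@le_anti _ _ (k x t) 0) ?kle ?k0 ?mulr0.
Qed.

Lemma bT_le_cT t : bT p k t <= cT p k t.
Proof.
apply: ler_sum => y _.
have [J0|Jn0] := eqVneq (\sum_x p x y * k x t) 0; first by rewrite J0 xlogy0 mul0r.
have Jp : 0 < \sum_x p x y * k x t by rewrite lt_def Jn0 J_ge0.
have qp : 0 < qT p k t by apply: lt_le_trans (J_le t y).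
rewrite xlogyE ?mulr_gt0 ?margY_gt0 // lnM ?posrE ?margY_gt0 // -subr_ge0.
set J := \sum_x p x y * k x t.
have -> : J * - ln (margY p y) - J * (ln J - (ln (margY p y) + ln (qT p k t))) =
          J * (ln (qT p k t) - ln J) by ring.
apply: mulr_ge0; first exact: ltW.
by rewrite subr_ge0 ler_ln ?posrE //; exact: J_le.
Qed.

Lemma cT_ge0 t : 0 <= cT p k t.
Proof.
apply: sumr_ge0 => y _; rewrite mulr_ge0 ?J_ge0 // oppr_ge0 ln_le0 //; exact: margY_le1.
Qed.

Lemma aT_ge0 t : 0 <= aT p k t.
Proof. exact: le_trans (bT_ge0 t) (bT_le_aT t). Qed.

Lemma AT_ge0 t : 0 <= AT p (tensor_eY k) t.
Proof.
have := ID_t t; move/(congr1 (fun z => z - bT p k t)); rewrite addrK => ->.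
rewrite -addrA addr_ge0 ?aT_ge0 // subr_ge0; exact: bT_le_cT.
Qed.

Lemma aT_le t : aT p k t <= \sum_x (margX p x * - ln (margX p x)) * k x t.
Proof.
apply: ler_sum => x _.
have [k00|kn0] := eqVneq (k x t) 0; first by rewrite k00 !mulr0 xlogy0.
have kp : 0 < k x t by rewrite lt_def kn0 k0.
have mp := margX_gt0 x.
rewrite xlogy_scale //; last by move=> _; exact: k_pos_qT kp.
rewrite -subr_ge0.
have -> : margX p x * - ln (margX p x) * k x t - margX p x * k x t * (ln (k x t) - ln (qT p k t))
   = margX p x * k x t * (ln (qT p k t) - (ln (margX p x) + ln (k x t))) by ring.
rewrite -lnM ?posrE //; apply: mulr_ge0; first by rewrite ltW // mulr_gt0.
rewrite subr_ge0 ler_ln ?posrE ?mulr_gt0 ?qT_ge //.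
exact: k_pos_qT kp.
Qed.

End PerT.

Lemma fin_real {R : realType} {e : \bar R} {r : R} :
  (0 <= e)%E -> (e <= r%:E)%E -> exists x : R, e = x%:E.
Proof. by case: e => [x _ _| |] //; exists x. Qed.

Lemma shift_series {R : realType} (f : nat -> R) : (forall t, 0 <= f t) ->
  (\sum_(0 <= t <oo) (f t)%:E = (f 0%N)%:E + \sum_(0 <= t <oo) (f t.+1)%:E)%E.
Proof.
move=> f0; rewrite nneseries_recl // => [|t _]; last by rewrite lee_fin.
rewrite -(nneseries_addn (f := fun t => (f t)%:E)) => [|t]; last by rewrite lee_fin.
by congr (_ + _)%E; apply: eq_eseriesr => i _; rewrite addn1.
Qed.

Definition mix {R : realType} {X : finType} (th : R) (q : X -> nat -> R) : X -> nat -> R :=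
  fun x t => if t is n.+1 then th * q x n else 1 - th.

Section Series.
Variables (R : realType) (X Y : finType) (p : X -> Y -> R).
Hypothesis p0 : forall x y, 0 < p x y.
Hypothesis p1 : \sum_x \sum_y p x y = 1.

Definition HY := \sum_y margY p y * - ln (margY p y).
Definition HX := \sum_x margX p x * - ln (margX p x).

Lemma chan_series (k : X -> nat -> R) : is_channel_XN k -> forall w : X -> R,
  (forall x, 0 <= w x) ->
  (\sum_(0 <= t <oo) (\sum_x w x * k x t)%:E)%E = (\sum_x w x)%:E.
Proof.
move=> [k0 k1] w w0.
transitivity (\sum_(0 <= t <oo) \sum_x ((w x)%:E * (k x t)%:E))%E.
  by apply: eq_eseriesr => t _; rewrite -sumEFin; apply: eq_bigr => x _; rewrite EFinM.
rewrite nneseries_sum => [|x t _]; last by rewrite mule_ge0 // lee_fin.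
rewrite -sumEFin; apply: eq_bigr => x _.
by rewrite nneseriesZl ?k1 ?mule1 // => t _; rewrite lee_fin.
Qed.

Section K.
Variable k : X -> nat -> R.
Hypothesis hk : is_channel_XN k.
Let k0 := proj1 hk.

Lemma MI_ID : (MI_XY_T p (tensor_eY k) + MI_Y_TIB p k = MI_X_TIB p k + (HY)%:E)%E.
Proof.
change (\sum_(0 <= t <oo) (AT p (tensor_eY k) t)%:E + \sum_(0 <= t <oo) (bT p k t)%:E =
        \sum_(0 <= t <oo) (aT p k t)%:E + (HY)%:E)%E.
rewrite -nneseriesD => [| t _ _ | t _ _]; last 2 first.
- by rewrite lee_fin AT_ge0.
- by rewrite lee_fin bT_ge0.
have -> : (HY%:E = \sum_(0 <= t <oo) (cT p k t)%:E)%E.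
  transitivity (\sum_(0 <= t <oo) (\sum_x (\sum_y p x y * - ln (margY p y)) * k x t)%:E)%E; last first.
    apply: eq_eseriesr => t _; rewrite cT_E exchange_big /=; congr (_%:E).
    by apply: eq_bigr => x _; rewrite mulr_suml; apply: eq_bigr => y _; ring.
  rewrite chan_series //; last first.
    move=> x; apply: sumr_ge0 => y _; apply: mulr_ge0; first exact: ltW.
    by rewrite oppr_ge0 ln_le0 //; exact: margY_le1.
  by rewrite /HY exchange_big /=; congr (_%:E); apply: eq_bigr => y _; rewrite /margY mulr_suml.
rewrite -nneseriesD => [| t _ _ | t _ _]; last 2 first.
- by rewrite lee_fin aT_ge0.
- by rewrite lee_fin cT_ge0.
by apply: eq_eseriesr => t _; rewrite -!EFinD ID_t.
Qed.

Lemma MI_X_ge0 : (0 <= MI_X_TIB p k)%E.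
Proof. by apply: nneseries_ge0 => t _ _; rewrite lee_fin aT_ge0. Qed.

Lemma MI_Y_ge0 : (0 <= MI_Y_TIB p k)%E.
Proof. by apply: nneseries_ge0 => t _ _; rewrite lee_fin bT_ge0. Qed.

Lemma MI_XY_T_ge0 : (0 <= MI_XY_T p (tensor_eY k))%E.
Proof. by apply: nneseries_ge0 => t _ _; rewrite lee_fin AT_ge0. Qed.

Lemma MI_X_le : (MI_X_TIB p k <= HX%:E)%E.
Proof.
rewrite /HX -(@chan_series k hk); last first.
  move=> x; apply: mulr_ge0; first exact: ltW (@margX_gt0 _ _ _ _ p0 p1 x).
  by rewrite oppr_ge0 ln_le0 //; exact: margX_le1.
apply: lee_nneseries => [t _ _|t _]; rewrite lee_fin; first by apply: aT_ge0.
by apply: aT_le.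
Qed.

Lemma MI_Y_le : (MI_Y_TIB p k <= MI_X_TIB p k)%E.
Proof.
apply: lee_nneseries => [t _ _|t _]; rewrite lee_fin; first by apply: bT_ge0.
by apply: bT_le_aT.
Qed.

Lemma fin_all : exists x y z : R, [/\ MI_X_TIB p k = x%:E, MI_Y_TIB p k = y%:E,
   MI_XY_T p (tensor_eY k) = z%:E, z + y = x + HY & 0 <= y <= x].
Proof.
have [x Ex] := fin_real MI_X_ge0 MI_X_le.
have [y Ey] := fin_real MI_Y_ge0 (le_trans MI_Y_le MI_X_le).
have [z Ez] : exists z : R, MI_XY_T p (tensor_eY k) = z%:E.
  apply: (fin_real MI_XY_T_ge0 (r := x + HY)).
  rewrite EFinD -Ex -MI_ID leeDl //; exact: MI_Y_ge0.
exists x, y, z; split => //.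
  by have := MI_ID; rewrite Ex Ey Ez -!EFinD => -[].
have := MI_Y_ge0; have := MI_Y_le; rewrite Ex Ey !lee_fin => -> ->; done.
Qed.

End K.
End Series.

Section Mix.
Variables (R : realType) (X Y : finType) (p : X -> Y -> R).
Hypothesis p0 : forall x y, 0 < p x y.
Hypothesis p1 : \sum_x \sum_y p x y = 1.
Variables (th : R) (q : X -> nat -> R).
Hypothesis th0 : 0 <= th.
Hypothesis th1 : th <= 1.
Hypothesis hq : is_channel_XN q.
Let q0 := proj1 hq.

Lemma mix_ge0 x t : 0 <= mix th q x t.
Proof. by case: t => [|n] /=; [rewrite subr_ge0 | rewrite mulr_ge0]. Qed.

Lemma mix_chan : is_channel_XN (mix th q).
Proof.
split; first exact: mix_ge0.
move=> x; rewrite shift_series; last exact: mix_ge0.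
rewrite /= (eq_eseriesr (g := fun t => (th%:E * (q x t)%:E)%E)) => [|t _]; last by rewrite EFinM.
rewrite nneseriesZl => [|t _]; last by rewrite lee_fin.
by rewrite (proj2 hq x) mule1 -EFinD subrK.
Qed.

Lemma qT_mix0 : qT p (mix th q) 0 = 1 - th.
Proof. by rewrite /qT /= -mulr_suml sum_margX // mul1r. Qed.

Lemma qT_mixS n : qT p (mix th q) n.+1 = th * qT p q n.
Proof. by rewrite /qT mulr_sumr; apply: eq_bigr => x _ /=; rewrite mulrCA. Qed.

Lemma MI_X_mix : MI_X_TIB p (mix th q) = (th%:E * MI_X_TIB p q)%E.
Proof.
change (\sum_(0 <= t <oo) (aT p (mix th q) t)%:E = th%:E * \sum_(0 <= t <oo) (aT p q t)%:E)%E.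
rewrite shift_series; last by move=> t; apply: aT_ge0 => //; exact: mix_ge0.
have -> : aT p (mix th q) 0 = 0.
  rewrite /aT qT_mix0 big1 // => x _ /=; apply: xlogy_id; rewrite mulr_ge0 ?subr_ge0 //.
  exact: ltW (@margX_gt0 _ _ _ _ p0 p1 x).
rewrite add0e -nneseriesZl => [|t _]; last by rewrite lee_fin; apply: aT_ge0.
apply: eq_eseriesr => t _; rewrite -EFinM; congr (_%:E).
rewrite /aT qT_mixS [RHS]mulr_sumr; apply: eq_bigr => x _ /=.
by rewrite !(mulrCA (margX p x) th) [LHS]xlogyZ.
Qed.

Lemma MI_Y_mix : MI_Y_TIB p (mix th q) = (th%:E * MI_Y_TIB p q)%E.
Proof.
change (\sum_(0 <= t <oo) (bT p (mix th q) t)%:E = th%:E * \sum_(0 <= t <oo) (bT p q t)%:E)%E.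
rewrite shift_series; last by move=> t; apply: bT_ge0 => //; exact: mix_ge0.
have -> : bT p (mix th q) 0 = 0.
  rewrite /bT qT_mix0 big1 // => y _ /=; rewrite -mulr_suml /margY; apply: xlogy_id.
  rewrite mulr_ge0 ?subr_ge0 // sumr_ge0 // => x _; exact: ltW.
rewrite add0e -nneseriesZl => [|t _]; last by rewrite lee_fin; apply: bT_ge0.
apply: eq_eseriesr => t _; rewrite -EFinM; congr (_%:E).
rewrite /bT qT_mixS [RHS]mulr_sumr; apply: eq_bigr => y _ /=.
rewrite (mulrCA (margY p y) th) -xlogyZ //; congr (xlogy _ _).
by rewrite mulr_sumr; apply: eq_bigr => x _; rewrite mulrCA.
Qed.

End Mix.

Theorem proposition5 (R : realType) (X Y : finType) (p : X -> Y -> R) (lam : R)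
    (kX : X -> nat -> R) :
  full_support_dist p -> 0 <= lam -> lam <= MI_XY p ->
  is_channel_XN kX ->
  (solves_A p lam (tensor_eY kX) <-> solves_B p lam kX).
Proof.
move=> [p0 p1] lam0 _ hk.
have KL_eq : forall k, KL_NY (push p (tensor_eY k)) (push (prod_marg p) (tensor_eY k))
    = MI_Y_TIB p k.
  move=> k; apply: eq_eseriesr => t _; congr (_%:E); apply: eq_bigr => y _.
  rewrite !push_tensor; congr (xlogy _ _).
  - by apply: eq_bigr => x _; rewrite mulrC.
  - by rewrite /qT mulr_sumr; apply: eq_bigr => x _; rewrite /prod_marg; ring.
split.
- case=> _ KLk minA.
  have Ek : MI_Y_TIB p kX = lam%:E by rewrite -KL_eq.
  split => //; first by rewrite Ek.
  move=> q' hq' lamq'.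
  have [x [y [z [Ex Ey Ez IDk _]]]] := fin_all _ _ _ _ p0 p1 _ hk.
  have [x' [y' [z' [Ex' Ey' Ez' IDq' /andP[y'0 y'x']]]]] := fin_all _ _ _ _ p0 p1 _ hq'.
  have ylam : y = lam by move: Ek; rewrite Ey => -[].
  rewrite Ey' lee_fin in lamq'.
  pose th := if y' == 0 then 1 else lam / y'.
  have [th0 th1 thy] : [/\ 0 <= th, th <= 1 & th * y' = lam].
    rewrite /th; have [y'E|y'n0] := eqVneq y' 0.
      rewrite y'E in lamq' *.
      by split => //; rewrite mulr0; apply/le_anti; rewrite lam0 lamq'.
    have y'p : 0 < y' by rewrite lt_def y'n0 y'0.
    split; first by rewrite divr_ge0 // ltW.
      by rewrite ler_pdivrMr // mul1r.
    by rewrite divfK.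
  have hm : is_channel_XN (mix th q') by apply: mix_chan.
  have MY : MI_Y_TIB p (mix th q') = lam%:E by rewrite MI_Y_mix // Ey' -EFinM thy.
  have KLm : KL_NY (push p (tensor_eY (mix th q'))) (push (prod_marg p) (tensor_eY (mix th q'))) = lam%:E
    by rewrite KL_eq MY.
  have := minA (tensor_eY (mix th q')) (ex_intro _ (mix th q') (conj hm erefl)) KLm.
  have [x'' [y'' [z'' [Ex'' Ey'' Ez'' ID'' _]]]] := fin_all _ _ _ _ p0 p1 _ hm.
  rewrite Ez Ez'' lee_fin => zz.
  have xx : x'' = th * x' by move: (MI_X_mix _ _ _ _ p0 p1 _ _ th0 th1 hq'); rewrite Ex'' Ex' -EFinM => -[].
  have yy : y'' = lam by move: MY; rewrite Ey'' => -[].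
  have : th * x' <= x' by rewrite ler_piMl // (le_trans y'0 y'x').
  rewrite Ex Ex' lee_fin; lra.
- case=> _ lamY minB.
  have [x [y [z [Ex Ey Ez IDk /andP[y0 yx]]]]] := fin_all _ _ _ _ p0 p1 _ hk.
  rewrite Ey lee_fin in lamY.
  have ylam : y = lam.
    apply/eqP; rewrite eq_le lamY andbT; apply/negP => /negP; rewrite -ltNge => lt.
    have yp : 0 < y by apply: le_lt_trans lt.
    pose th := lam / y.
    have th0 : 0 <= th by rewrite divr_ge0 // ltW.
    have th1' : th < 1 by rewrite ltr_pdivrMr // mul1r.
    have th1 : th <= 1 by rewrite ltW.
    have thy : th * y = lam by rewrite divfK // gt_eqF.
    have hm : is_channel_XN (mix th kX) by apply: mix_chan.
    have MY : MI_Y_TIB p (mix th kX) = lam%:E by rewrite MI_Y_mix // Ey -EFinM thy.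
    have MY' : (lam%:E <= MI_Y_TIB p (mix th kX))%E by rewrite MY.
    have := minB (mix th kX) hm MY'.
    rewrite (MI_X_mix _ _ _ _ p0 p1 _ _ th0 th1 hk) Ex -EFinM lee_fin => xx.
    have : 0 < x * (1 - th) by rewrite mulr_gt0 ?subr_gt0 // (lt_le_trans yp yx).
    nra.
  split.
  + by exists kX.
  + by rewrite KL_eq Ey ylam.
  + move=> k' [q' [hq' ->]] KLq'.
    have [x' [y' [z' [Ex' Ey' Ez' IDq' _]]]] := fin_all _ _ _ _ p0 p1 _ hq'.
    have y'lam : y' = lam by move: KLq'; rewrite KL_eq Ey' => -[].
    have MY' : (lam%:E <= MI_Y_TIB p q')%E by rewrite -KL_eq KLq'.
    have := minB q' hq' MY'.
    rewrite Ex Ex' lee_fin => xx.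
    rewrite Ez Ez' lee_fin; lra.
Qed.
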